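(* Let $\Omega$ be an open set in $\mathbb{R}^n$ and $\Gamma$ a closed subset of $\partial\Omega$. Let $1\le q\le\infty$, $\mu\in\mathsf{M}^q(\Omega)$, and let $0\le t\le n(q-1)/q$ if $1\le q<\infty$, resp. $0\le t\le n$ if $q=\infty$. Then $\nu:=\delta_\Gamma^{-t}\mu$ satisfies $\nu\in\mathsf{M}_\Gamma^{qn/(n+qt)}(\Omega)$ if $1\le q<\infty$, and $\nu\in\mathsf{M}_\Gamma^{n/t}(\Omega)$ if $q=\infty$.
   Context: $\delta_\Gamma(x)=\mathrm{dist}(x,\Gamma)$. For $1\le q\le\infty$, $q'=q/(q-1)$ ($1'=\infty$, $\infty'=1$), and $n/\infty=0$ (so $n/0=\infty$ when $t=0$). The Morrey space $\mathsf{M}^q(\Omega)$ is the set of regular signed measures $\mu$ on $\Omega$ with $\sup\{r^{-n/q'}|\mu|(\Omega\cap B(x,r)): x\in\Omega,\ 0<r<\infty\}<\infty$. $\mathsf{M}^q_\Gamma(\Omega)$ is the set of $\nu=\nu_+-\nu_-$ with $\nu_\pm$ nonnegative Radon measures on $\Omega$ and $\sup\{r^{-n/q'}|\nu|(\Omega\cap B(x,r)): x\in\Omega,\ 0<r<\delta_\Gamma(x)/2\}<\infty$. The charge $\delta_\Gamma^{-t}\mu$ is $\varphi\mapsto\int_\Omega\varphi\,\delta_\Gamma^{-t}\,d\mu$. *)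

(* Defs.v *)
From HB Require Import structures.
From mathcomp Require Import all_boot all_order all_algebra.
From mathcomp Require Import all_classical all_reals all_analysis.
Set Implicit Arguments. Unset Strict Implicit. Unset Printing Implicit Defensive.
Import Order.TTheory GRing.Theory Num.Theory.
Import numFieldNormedType.Exports.
Local Open Scope classical_set_scope.
Local Open Scope ring_scope.

Section MorreyDefs.
Variables (R : realType) (n : nat).

Definition Rn := 'rV[R]_n.

Definition BorelRn := g_sigma_algebraType (@open Rn).

Definition enorm (x : Rn) : R := Num.sqrt (\sum_(i < n) x ord0 i ^+ 2).
Definition eball (x : Rn) (r : R) : set Rn := [set y | enorm (y - x) < r].

(* delta_G(x) = dist(x, G) (= +oo when G is empty). *)
Definition dist_to (G : set Rn) (x : Rn) : \bar R :=
  ereal_inf [set (enorm (x - y))%:E | y in G].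

Definition boundary (O : set Rn) : set Rn := closure O `\` interior O.

(* n / q' for an exponent q in [1, +oo] (q' = q/(q-1), n/oo = 0). *)
Definition morrey_exp (q : \bar R) : R :=
  match q with
  | r%:E => n%:R * (1 - r^-1)
  | _ => n%:R
  end.

(* the weight delta_G^{-t}, with the convention (+oo)^{-t} = 0 if t > 0 and
   = 1 if t = 0 (only relevant when G is empty). *)
Definition weight (G : set Rn) (t : R) (x : Rn) : \bar R :=
  match dist_to G x with
  | d%:E => (d `^ (- t))%:E
  | _ => if t == 0 then 1%E else 0%E
  end.

Definition is_measure (m : set BorelRn -> \bar R) : Prop :=
  [/\ m set0 = 0%E, (forall A, measurable A -> (0 <= m A)%E)
    & semi_sigma_additive m].

Definition radon_on (O : set Rn) (m : set BorelRn -> \bar R) : Prop :=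
  forall K : set Rn, compact K -> K `<=` O -> (m K < +oo)%E.

Definition mutually_singular_on (O : set Rn) (m1 m2 : set BorelRn -> \bar R) :=
  exists P : set BorelRn, measurable P /\
    m1 (O `&` ~` P) = 0%E /\ m2 (O `&` P) = 0%E.

(* A signed (Radon) measure on O is represented by its Jordan decomposition
   (mp, mn): two mutually singular nonnegative Radon measures; its total
   variation is |mu| = mp + mn. *)
Definition signed_radon_on (O : set Rn) (mp mn : set BorelRn -> \bar R) :=
  [/\ is_measure mp, is_measure mn, radon_on O mp, radon_on O mn
    & mutually_singular_on O mp mn].

Definition in_Morrey (O : set Rn) (q : \bar R) (mp mn : set BorelRn -> \bar R) :=
  signed_radon_on O mp mn /\
  exists C : R, forall (x : Rn) (r : R), O x -> 0 < r ->
    ((r `^ (- morrey_exp q))%:E * (mp (O `&` eball x r) + mn (O `&` eball x r))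
      <= C%:E)%E.

Definition in_MorreyG (O G : set Rn) (q : \bar R) (np nn : set BorelRn -> \bar R) :=
  signed_radon_on O np nn /\
  exists C : R, forall (x : Rn) (r : R), O x -> 0 < r ->
    ((r *+ 2)%:E < dist_to G x)%E ->
    ((r `^ (- morrey_exp q))%:E * (np (O `&` eball x r) + nn (O `&` eball x r))
      <= C%:E)%E.

Definition weighted (G : set Rn) (t : R) (m : {measure set BorelRn -> \bar R})
  : set BorelRn -> \bar R :=
  fun A => (\int[m]_(y in A) weight G t y)%E.

End MorreyDefs.

(* Main.v *)
Require Import Defs.
From HB Require Import structures.
From mathcomp Require Import all_boot all_order all_algebra.
From mathcomp Require Import all_classical all_reals all_analysis.
From mathcomp Require Import ring lra measurable_realfun.
Set Implicit Arguments. Unset Strict Implicit. Unset Printing Implicit Defensive.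
Import Order.TTheory GRing.Theory Num.Theory.
Import numFieldNormedType.Exports.
Local Open Scope classical_set_scope.
Local Open Scope ring_scope.

Section H.
Variables (R : realType) (n : nat).
Local Notation Rn := (Rn R n).

Definition sq (x : Rn) := \sum_(i < n) x ord0 i ^+ 2.
Lemma sq_ge0 x : 0 <= sq x.
Proof. by apply: sumr_ge0 => i _; exact: sqr_ge0. Qed.

Lemma CS (a b : Rn) : (\sum_(i < n) a ord0 i * b ord0 i) ^+ 2 <= sq a * sq b.
Proof.
set S := \sum_(i < n) _.
have [B0|Bpos] := eqVneq (sq b) 0.
  have bz : forall i, b ord0 i = 0.
    move=> i; apply/eqP; rewrite -sqrf_eq0; apply/eqP.
    by move/eqP: B0; rewrite psumr_eq0 => [/allP/(_ i (mem_index_enum _))/implyP/(_ isT)/eqP|j _]; [|exact: sqr_ge0].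
  have -> : S = 0 by rewrite /S big1 // => i _; rewrite bz mulr0.
  by rewrite expr0n /= mulr_ge0 ?sq_ge0.
have Bp : 0 < sq b by rewrite lt_def Bpos sq_ge0.
have H : 0 <= \sum_(i < n) (sq b * a ord0 i - S * b ord0 i) ^+ 2.
  by apply: sumr_ge0 => i _; exact: sqr_ge0.
have E : \sum_(i < n) (sq b * a ord0 i - S * b ord0 i) ^+ 2 =
   sq b * (sq a * sq b - S ^+ 2).
  transitivity (\sum_(i < n) (sq b ^+ 2 * a ord0 i ^+ 2 - (2 * sq b * S) * (a ord0 i * b ord0 i) + S ^+ 2 * b ord0 i ^+ 2)).
    by apply: eq_bigr => i _; ring.
  rewrite big_split /= sumrB -!mulr_sumr -/S -/(sq a) -/(sq b) /S; ring.
rewrite E in H.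
by rewrite -subr_ge0; move: H; rewrite pmulr_rge0.
Qed.

Lemma enorm_tri (a b : Rn) : enorm (a + b) <= enorm a + enorm b.
Proof.
rewrite /enorm -/(sq (a + b)) -/(sq a) -/(sq b).
rewrite -(ler_pXn2r (_ : (0 < 2)%N)) ?nnegrE ?addr_ge0 ?sqrtr_ge0 //.
rewrite sqr_sqrtr ?sq_ge0 // sqrrD !sqr_sqrtr ?sq_ge0 //.
have -> : sq (a + b) = sq a + sq b + 2 * \sum_(i < n) a ord0 i * b ord0 i.
  rewrite /sq mulr_sumr -!big_split /=; apply: eq_bigr => i _; rewrite !mxE; ring.
have key : \sum_(i < n) a ord0 i * b ord0 i <= Num.sqrt (sq a) * Num.sqrt (sq b).
  rewrite -sqrtrM ?sq_ge0 //.
  apply: le_trans (real_ler_norm _) _; first exact: num_real.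
  by rewrite -sqrtr_sqr ler_sqrt ?CS // mulr_ge0 ?sq_ge0.
rewrite -mulr_natr; lra.
Qed.
End H.
Section H2.
Variables (R : realType) (n : nat).
Local Notation Rn := (Rn R n).
Lemma sq_cont : continuous (@sq R n).
Proof.
move=> x; rewrite /sq.
apply: (@cvg_big R 'I_n +%R 0 xpredT add_continuous Rn (nbhs x) (index_enum _) (fun i (y : Rn) => y ord0 i ^+ 2) (fun i => x ord0 i ^+ 2)).
- move=> i _; apply: cvgM; exact: coord_continuous.
Qed.
Lemma enorm_cont : continuous (@enorm R n).
Proof.
move=> x; apply: (continuous_comp (@sq_cont x)); exact: sqrt_continuous.
Qed.
End H2.
Section H3.
Variables (R : realType) (n : nat).
Local Notation Rn := (Rn R n).
Local Notation enorm := (@enorm R n).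

Lemma enorm_ge0 (x : Rn) : 0 <= enorm x.
Proof. exact: sqrtr_ge0. Qed.

Lemma enormN (x : Rn) : enorm (- x) = enorm x.
Proof. by rewrite /enorm; congr Num.sqrt; apply: eq_bigr => i _; rewrite mxE sqrrN. Qed.

Lemma enorm_sym (x y : Rn) : enorm (x - y) = enorm (y - x).
Proof. by rewrite -enormN opprB. Qed.

Lemma coord_le_enorm (x : Rn) i : `|x ord0 i| <= enorm x.
Proof.
rewrite /enorm -sqrtr_sqr ler_sqrt ?sq_ge0 //.
rewrite (bigD1 i) //= lerDl; apply: sumr_ge0 => j _; exact: sqr_ge0.
Qed.

Lemma mxnorm_le_enorm (x : Rn) : `|x| <= enorm x.
Proof.
rewrite [leLHS]/Num.Def.normr /= mx_normrE; apply: bigmax_le; first exact: enorm_ge0.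
by move=> [i j] _ /=; rewrite (ord1 i); exact: coord_le_enorm.
Qed.

Lemma enorm_cvg0 (x : Rn) : (fun y => enorm (x - y)) @ x --> (0 : R).
Proof.
have -> : (0 : R) = enorm (x - x).
  by rewrite subrr /enorm big1 ?sqrtr0 // => i _; rewrite mxE expr0n.
have h1 : (fun y : 'rV[R]_n => (x : 'rV[R]_n) - y) @ (x : 'rV[R]_n) --> ((x : 'rV[R]_n) - x).
  exact: (@cvgB R 'rV[R]_n 'rV[R]_n (nbhs (x : 'rV[R]_n)) _ (cst x) id x x (cvg_cst _) cvg_id).
have h2 := continuous_comp h1 (@enorm_cont R n _).
exact: h2.
Qed.

Variable G : set Rn.
Definition DR (x : Rn) : R := fine (dist_to G x).

Lemma dist_ge0 x : (0 <= dist_to G x)%E.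
Proof. by apply: le_ereal_inf_tmp => _ [y _ <-]; rewrite lee_fin enorm_ge0. Qed.

Lemma dist_le x y : G y -> (dist_to G x <= (enorm (x - y))%:E)%E.
Proof. by move=> Gy; apply: ereal_inf_lbound; exists y. Qed.

Hypothesis G0 : G !=set0.

Lemma distE x : dist_to G x = (DR x)%:E.
Proof.
have [y Gy] := G0.
rewrite /DR fineK // ge0_fin_numE ?dist_ge0 //.
apply: (le_lt_trans (dist_le x Gy)); exact: ltry.
Qed.

Lemma DR_ge0 x : 0 <= DR x.
Proof. by rewrite -lee_fin -distE dist_ge0. Qed.

Lemma DR_le x y : DR x <= enorm (x - y) + DR y.
Proof.
rewrite -lerBlDl -lee_fin -distE; apply: le_ereal_inf_tmp => _ [z Gz <-].
rewrite lee_fin lerBlDl.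
have := dist_le x Gz; rewrite distE lee_fin => /le_trans; apply.
by have := @enorm_tri R n (x - y) (y - z); rewrite addrA subrK.
Qed.

Lemma DR_lip x y : `|DR x - DR y| <= enorm (x - y).
Proof.
rewrite ler_norml; have h1 := DR_le x y; have h2 := DR_le y x.
rewrite (enorm_sym y x) in h2; apply/andP; split; lra.
Qed.

Lemma DR_cont : continuous DR.
Proof.
move=> x; apply/(@cvgrPdist_lt _ _ _ _ (@nbhs_filter 'rV[R]_n x)) => e e0.
have := (@cvgrPdist_lt _ _ _ _ (@nbhs_filter 'rV[R]_n x) _ _).1 (enorm_cvg0 x) e e0.
apply: filterS => y; rewrite sub0r normrN ger0_norm ?enorm_ge0 //.
exact: le_lt_trans (DR_lip x y).
Qed.
End H3.
Section H4.
Variables (R : realType) (n : nat).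
Local Notation Rn := (Rn R n).
Local Notation B := (BorelRn R n).

Lemma open_meas (A : set Rn) : open A -> measurable (A : set B).
Proof. by move=> oA; apply: sub_sigma_algebra. Qed.

Lemma cont_meas (f : Rn -> R) : continuous f -> measurable_fun [set: B] (f : B -> R).
Proof.
move=> cf; apply: (measurability _ (measurable_realfun.RGenInftyO.measurableE R)).
move=> _ [_ [x ->] <-]; rewrite setTI; apply: open_meas.
have -> : f @^-1` `]-oo, x[%classic = f @^-1` [set y | y < x].
  by apply/seteqP; split => y /=; rewrite in_itv.
by apply: open_comp; [move=> y _; exact: cf | exact: open_lt].
Qed.
End H4.
Section H5.
Variables (R : realType) (n : nat).
Local Notation Rn := (Rn R n).
Local Notation B := (BorelRn R n).
Local Open Scope ereal_scope.

Lemma dist_empty (G : set Rn) x : ~ (G !=set0) -> dist_to G x = +oo.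
Proof.
move=> G0; rewrite /dist_to.
have -> : [set (enorm (x - y))%:E | y in G] = set0.
  by apply/seteqP; split => // z [y Gy _]; apply: G0; exists y.
exact: ereal_inf0.
Qed.

Variables (G : set Rn) (t : R).
Hypothesis t0 : (0 <= t)%R.

Lemma weight_ge0 y : 0 <= weight G t y.
Proof.
rewrite /weight; case: (dist_to G y) => [d| |]; rewrite ?lee_fin ?powR_ge0 //;
  by case: ifP.
Qed.

Lemma weight_meas : measurable_fun [set: BorelRn R n] (weight G t).
Proof.
have [G0|G0] := pselect (G !=set0); last first.
  have -> : weight G t = cst (if t == 0%R then 1 else 0).
    by apply/funext => y; rewrite /weight dist_empty.
  exact: measurable_cst.
have -> : weight G t = EFin \o (fun y => (DR G y) `^ (- t))%R.
  by apply/funext => y; rewrite /weight (distE G0).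
have h := (measurableT_comp (EFin_measurable (D:=setT)) (measurableT_comp (measurable_powR (- t)) (cont_meas (DR_cont G0)))).
exact: h.
Qed.

Lemma weight_le (r : R) y : (0 < r)%R -> r%:E <= dist_to G y ->
  weight G t y <= (r `^ (- t))%:E.
Proof.
move=> r0; rewrite /weight; case: (dist_to G y) => [d| |] //.
- rewrite !lee_fin => rd; rewrite !powRN lef_pV2 ?posrE ?powR_gt0 //; last by apply: lt_le_trans rd.
  by apply: ge0_ler_powR; rewrite ?nnegrE ?(ltW r0) ?(le_trans (ltW r0) rd).
- move=> _; case: ifP => [/eqP ->|_]; first by rewrite oppr0 powRr0.
  by rewrite lee_fin powR_ge0.
Qed.
End H5.
Section H6.
Variables (R : realType) (n : nat).
Local Notation Rn := (Rn R n).
Variable G : set Rn.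
Hypotheses (cG : closed G) (G0 : G !=set0).

Lemma DR_pos y : ~ G y -> 0 < DR G y.
Proof.
move=> Gy.
have oC : open (~` G) by exact: closed_openC.
rewrite openE in oC.
have /nbhs_ballP[e e0 He] := oC y Gy.
apply: (lt_le_trans e0).
rewrite -lee_fin -(distE G0); apply: le_ereal_inf_tmp => _ [z Gz <-].
rewrite lee_fin; apply: le_trans (mxnorm_le_enorm _).
rewrite leNgt; apply/negP => h; apply: (He z) Gz.
by rewrite -ball_normE /=.
Qed.

Lemma DR_compact (K : set Rn) : compact K -> (forall y, K y -> ~ G y) ->
  exists2 e, 0 < e & forall y, K y -> e <= DR G y.
Proof.
move=> cK KG.
have cI : compact (DR G @` K).
  apply: continuous_compact => //; apply: continuous_subspaceT => x.
  exact: DR_cont.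
have clI : closed (DR G @` K) by apply: compact_closed => //; exact: Rhausdorff.
have oC : open (~` (DR G @` K)) by exact: closed_openC.
rewrite openE in oC.
have I0 : (~` (DR G @` K)) 0.
  by move=> [y Ky /eqP]; rewrite gt_eqF // DR_pos //; exact: KG.
have /nbhs_ballP[e e0 He] := oC 0 I0.
exists e => // y Ky.
rewrite leNgt; apply/negP => h; apply: (He (DR G y)); last by exists y.
by rewrite -ball_normE /= sub0r normrN ger0_norm ?DR_ge0.
Qed.
End H6.
Section H7.
Variables (R : realType) (n : nat).
Local Notation Rn := (Rn R n).

Lemma eball_open (x : Rn) r : open (eball x r).
Proof.
have -> : eball x r = (fun y => enorm (y - x)) @^-1` [set z | z < r] by [].
apply: open_comp; last exact: open_lt.
move=> z _.
have h1 : (fun y : 'rV[R]_n => y - (x : 'rV[R]_n)) @ (z : 'rV[R]_n) --> ((z : 'rV[R]_n) - x).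
  exact: (@cvgB R 'rV[R]_n 'rV[R]_n (nbhs (z : 'rV[R]_n)) _ id (cst x) z x cvg_id (cvg_cst _)).
have h2 := continuous_comp h1 (@enorm_cont R n _).
exact: h2.
Qed.

Lemma exp_rel (q : \bar R) (t : R) : (0 < n)%N -> (1 <= q)%E -> 0 <= t ->
  let p : \bar R :=
    match q with
    | r%:E => (r * n%:R / (n%:R + r * t))%:E
    | _ => if t == 0 then +oo%E else (n%:R / t)%:E
    end in
  morrey_exp n p + t = morrey_exp n q.
Proof.
move=> n0 q1 t0 p; rewrite /p.
have nz : (n%:R : R) != 0 by rewrite pnatr_eq0 -lt0n.
have npos : (0 : R) < n%:R by rewrite ltr0n.
case: q q1 {p} => [r| |] //.
- rewrite lee_fin => r1 /=.
  have r0 : r != 0 by rewrite gt_eqF // (lt_le_trans ltr01 r1).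
  have nrt : n%:R + r * t != 0.
    by rewrite gt_eqF // ltr_pwDl // mulr_ge0 // (le_trans ler01 r1).
  rewrite invf_div; field.
  by rewrite r0 nz.
- move=> _ /=; case: ifPn => [/eqP -> /=|t0'] /=; first by rewrite addr0.
  rewrite invf_div; field; by rewrite ?t0' ?nz.
Qed.
End H7.
Section H8.
Variables (R : realType) (n : nat).
Local Notation Rn := (Rn R n).
Local Notation B := (BorelRn R n).
Local Open Scope ereal_scope.
Variables (G : set Rn) (t : R) (m : {measure set B -> \bar R}).
Hypothesis t0 : (0 <= t)%R.

Lemma weighted_measure : is_measure (weighted G t m).
Proof.
split.
- exact: integral_set0.
- by move=> A mA; apply: integral_ge0 => y _; exact: weight_ge0.
- apply: semi_sigma_additive_nng_induced; first exact: weight_meas.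
  by move=> y; exact: weight_ge0.
Qed.

Lemma weighted_null (A : set B) : measurable A -> m A = 0 -> weighted G t m A = 0.
Proof.
move=> mA mA0; rewrite /weighted (ge0_negligible_integral mA mA) //.
- by rewrite setDv integral_set0.
- apply: measurable_funTS. exact: weight_meas.
- by move=> y _; exact: weight_ge0.
Qed.

Lemma weighted_le (A : set B) (e : R) : measurable A -> (0 < e)%R ->
  (forall y, A y -> e%:E <= dist_to G y) ->
  weighted G t m A <= (e `^ (- t))%:E * m A.
Proof.
move=> mA e0 He; rewrite /weighted -integral_cst //.
apply: ge0_le_integral => //.
- by move=> y _; exact: weight_ge0.
- apply: measurable_funTS. exact: weight_meas.
- by move=> y Ay; apply: weight_le => //; exact: He.
Qed.
End H8.

Unset Implicit Arguments.
Set Strict Implicit.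

Theorem proposition6p1 (R : realType) (n : nat) (Omega Gamma : set (Rn R n))
  (q : \bar R) (t : R) (mup mun : {measure set (BorelRn R n) -> \bar R}) :
  (0 < n)%N ->
  open Omega -> closed Gamma -> Gamma `<=` boundary Omega ->
  (1 <= q)%E ->
  in_Morrey Omega q mup mun ->
  0 <= t ->
  (forall r : R, q = r%:E -> t <= n%:R * (r - 1) / r) ->
  (q = +oo%E -> t <= n%:R) ->
  let p : \bar R :=
    match q with
    | r%:E => (r * n%:R / (n%:R + r * t))%:E
    | _ => if t == 0 then +oo%E else (n%:R / t)%:E
    end in
  in_MorreyG Omega Gamma p (weighted Gamma t mup) (weighted Gamma t mun).
Proof.
move=> n0 oO cG GbO q1 [[_ _ radp radn [P [mP [Pp Pn]]]] [C HC]] t0 hq hinf p.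
have oO' := oO; rewrite openE in oO'.
have OG : forall y, Omega y -> ~ Gamma y.
  by move=> y Oy Gy; have [_ Hi] := GbO y Gy; apply: Hi; exact: oO' y Oy.
have mO : measurable (Omega : set (BorelRn R n)) := open_meas oO.
have rad : forall m : {measure set (BorelRn R n) -> \bar R},
    radon_on Omega m -> radon_on Omega (weighted Gamma t m).
  move=> m rm K cK KO.
  have mK : measurable (K : set (BorelRn R n)).
    have clK : closed K by apply: compact_closed cK; exact: norm_hausdorff.
    rewrite -(setCK K); apply: measurableC; apply: open_meas; exact: closed_openC.
  have [e e0 He] : exists2 e : R, (0 < e)%R &
      forall y, K y -> (e%:E <= dist_to Gamma y)%E.
    have [G0|G0] := pselect (Gamma !=set0).
      have [e e0 He] := DR_compact cG G0 cK (fun y Ky => OG y (KO y Ky)).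
      by exists e => // y Ky; rewrite (distE G0) lee_fin He.
    by exists 1%R => // y _; rewrite dist_empty // leey.
  apply: le_lt_trans (weighted_le m t0 mK e0 He) _.
  apply: lte_mul_pinfty => //; first by rewrite lee_fin powR_ge0.
  exact: rm K cK KO.
split.
  split.
  - exact: weighted_measure.
  - exact: weighted_measure.
  - exact: rad.
  - exact: rad.
  - exists P; split => //; split; apply: weighted_null => //.
    + exact: (measurableI _ _ mO (measurableC mP)).
    + exact: (measurableI _ _ mO mP).
exists C => x r Ox r0 rx.
set A := Omega `&` eball x r.
have mA : measurable (A : set (BorelRn R n)).
  exact: (measurableI _ _ mO (open_meas (@eball_open _ _ x r))).
have HA : forall y, A y -> ((r)%:E <= dist_to Gamma y)%E.
  move=> y [Oy By].
  have [G0|G0] := pselect (Gamma !=set0); last by rewrite dist_empty // leey.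
  rewrite (distE G0) lee_fin; move: rx; rewrite (distE G0) lte_fin => rx.
  have := DR_le G0 x y; rewrite enorm_sym; move: By; rewrite /eball => By.
  rewrite -mulr_natr in rx; move=> h; have By2 : enorm (y - x) < r := By; lra.
have le1 := weighted_le mup t0 mA r0 HA.
have le2 := weighted_le mun t0 mA r0 HA.
apply: le_trans (HC x r Ox r0).
have E : morrey_exp n p + t = morrey_exp n q := exp_rel n0 q1 t0.
rewrite -E opprD powRD; last by apply/implyP => _; rewrite gt_eqF.
rewrite EFinM -muleA; apply: lee_wpmul2l; first by rewrite lee_fin powR_ge0.
rewrite ge0_muleDr ?measure_ge0 //.
exact: leeD.
Qed.
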